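(* Assume the standing assumptions below, and write $\mathbf{x}^*(\mathbf{a})\in\mathbb{R}^{2n}$ for the unique solution of the fixed-point equation $\mathbf{x}=\mathbf{g}(\mathbf{a},\mathbf{x})$. For $\boldsymbol{\xi}\in\{0,1\}^n$ define the $2n\times 2n$ matrix $$\mathbf{K}_{\boldsymbol{\xi}}=\begin{pmatrix}\operatorname{diag}(\boldsymbol{\xi})\mathbf{M}^s & \operatorname{diag}(\boldsymbol{\xi})\mathbf{M}^d\\ \operatorname{diag}(\mathbf{1}-\boldsymbol{\xi})\mathbf{M}^s & \operatorname{diag}(\mathbf{1}-\boldsymbol{\xi})\mathbf{M}^d\end{pmatrix}.$$ Then the following hold. 1. $\kappa:=\max_{\boldsymbol{\xi}\in\{0,1\}^n}\|\mathbf{K}_{\boldsymbol{\xi}}\|_1<1$. 2. For all $\mathbf{a}_1,\mathbf{a}_2\in(0,\infty)^n$, $$\|\mathbf{x}^*(\mathbf{a}_1)-\mathbf{x}^*(\mathbf{a}_2)\|_1\le (1-\kappa)^{-1}\,\|\mathbf{a}_1-\mathbf{a}_2\|_1.$$ Here $\|\cdot\|_1$ is the $\ell^1$ norm on vectors, and for matrices it is the induced operator norm, i.e. the maximum absolute column sum.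
   Context: Standing model (network valuation with cross-holdings). There are $n$ firms. Cross-holding matrices. $\mathbf{M}^s,\mathbf{M}^d\in\mathbb{R}^{n\times n}$ are matrices of equity and debt cross-holding fractions: firm $i$ holds fraction $M^s_{ij}$ of firm $j$'s equity and fraction $M^d_{ij}$ of firm $j$'s debt. They satisfy: - $M^s_{ii}=M^d_{ii}=0$ for all $i$; - $M^s_{ij},M^d_{ij}\ge 0$ for all $i,j$; - $\sum_i M^s_{ij}<1$ and $\sum_i M^d_{ij}<1$ for every $j$. Asset and debt data. Firm $i$ has external asset value $a_i>0$ and nominal debt $d_i>0$ (fixed). Fixed-point map. For $\mathbf{x}=(\mathbf{s};\mathbf{r})\in\mathbb{R}^{2n}$ (equity values $\mathbf{s}$ stacked over debt recovery values $\mathbf{r}$), define $\mathbf{g}=(g^s_1,\dots,g^s_n,g^r_1,\dots,g^r_n)$ by $$g^s_i(\mathbf{a},\mathbf{x})=\max\Big\{0,\;a_i+\sum_j M^s_{ij}s_j+\sum_j M^d_{ij}r_j-d_i\Big\},$$ $$g^r_i(\mathbf{a},\mathbf{x})=\min\Big\{d_i,\;a_i+\sum_j M^s_{ij}s_j+\sum_j M^d_{ij}r_j\Big\}.$$ For every $\mathbf{a}\in(0,\infty)^n$ the equation $\mathbf{x}=\mathbf{g}(\mathbf{a},\mathbf{x})$ has a unique (nonnegative) solution, denoted $\mathbf{x}^*(\mathbf{a})=(\mathbf{s}^*(\mathbf{a});\mathbf{r}^*(\mathbf{a}))$. *)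

(* Defs.v *)
From HB Require Import structures.
From mathcomp Require Import all_boot all_order all_algebra.
From mathcomp Require Import reals.
Set Implicit Arguments. Unset Strict Implicit. Unset Printing Implicit Defensive.
Import Order.TTheory GRing.Theory Num.Theory.
Local Open Scope ring_scope.

Section Defs.
Variables (R : realType) (n : nat).

Definition vnorm1 (m : nat) (v : 'cV[R]_m) : R := \sum_(i < m) `|v i 0|.

Definition mnorm1 (p q : nat) (A : 'M[R]_(p, q)) : R :=
  \big[Num.max/0]_(j < q) \sum_(i < p) `|A i j|.

(* diag(xi) for xi in {0,1}^n, encoded as a boolean vector *)
Definition diag01 (xi : {ffun 'I_n -> bool}) : 'M[R]_n :=
  diag_mx (\row_i ((xi i)%:R : R)).
Definition diag01c (xi : {ffun 'I_n -> bool}) : 'M[R]_n :=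
  diag_mx (\row_i (1 - (xi i)%:R : R)).

Definition Kxi (Ms Md : 'M[R]_n) (xi : {ffun 'I_n -> bool}) : 'M[R]_(n + n) :=
  block_mx (diag01 xi *m Ms) (diag01 xi *m Md)
           (diag01c xi *m Ms) (diag01c xi *m Md).

Definition kappa (Ms Md : 'M[R]_n) : R :=
  \big[Num.max/0]_(xi : {ffun 'I_n -> bool}) mnorm1 (Kxi Ms Md xi).

(* the fixed-point map g(a, x), x = (s; r) stacked *)
Definition gmap (Ms Md : 'M[R]_n) (d a : 'cV[R]_n) (x : 'cV[R]_(n + n))
  : 'cV[R]_(n + n) :=
  let s := usubmx x in
  let r := dsubmx x in
  let z := a + Ms *m s + Md *m r in
  col_mx (\col_i Num.max 0 (z i 0 - d i 0)) (\col_i Num.min (d i 0) (z i 0)).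

End Defs.

(* Main.v *)
Require Import Defs.
From HB Require Import structures.
From mathcomp Require Import all_boot all_order all_algebra.
From mathcomp Require Import reals.
From mathcomp Require Import ring lra.
Import Order.TTheory GRing.Theory Num.Theory.
Local Open Scope ring_scope.

Section Aux.
Variables (R : realType) (n : nat) (Ms Md : 'M[R]_n).

Lemma maxmin_sum (u d : R) : Num.max 0 (u - d) + Num.min d u = u.
Proof.
case: (lerP u d) => h.
- by rewrite max_l ?min_r //; lra.
- by rewrite max_r ?min_l //; try lra; apply: ltW.
Qed.

Lemma abs_add_le (p q : R) : 0 <= p -> 0 <= q -> `|p| + `|q| <= `|p + q|.
Proof. by move=> hp hq; rewrite !ger0_norm ?addr_ge0. Qed.

Lemma key (u v d : R) :
  `|Num.max 0 (u - d) - Num.max 0 (v - d)| + `|Num.min d u - Num.min d v|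
  <= `|u - v|.
Proof.
wlog hvu : u v / v <= u.
  move=> H; case/orP: (le_total v u) => h; first exact: H.
  rewrite (distrC u) (distrC (Num.max 0 (u - d))) (distrC (Num.min d u)).
  by apply: H.
have e : u - v = (Num.max 0 (u - d) - Num.max 0 (v - d))
                 + (Num.min d u - Num.min d v).
  have := maxmin_sum u d; have := maxmin_sum v d; lra.
rewrite e; apply: abs_add_le; rewrite subr_ge0.
- apply: le_max2 => //; lra.
- by apply: le_min2.
Qed.

Lemma Kentry_l xi (i j : 'I_n) :
  Kxi Ms Md xi (lshift n i) (lshift n j) = (xi i)%:R * Ms i j.
Proof. by rewrite /Kxi block_mxEul /diag01 mul_diag_mx !mxE. Qed.
Lemma Kentry_dl xi (i j : 'I_n) :
  Kxi Ms Md xi (rshift n i) (lshift n j) = (1 - (xi i)%:R) * Ms i j.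
Proof. by rewrite /Kxi block_mxEdl /diag01c mul_diag_mx !mxE. Qed.
Lemma Kentry_ur xi (i j : 'I_n) :
  Kxi Ms Md xi (lshift n i) (rshift n j) = (xi i)%:R * Md i j.
Proof. by rewrite /Kxi block_mxEur /diag01 mul_diag_mx !mxE. Qed.
Lemma Kentry_dr xi (i j : 'I_n) :
  Kxi Ms Md xi (rshift n i) (rshift n j) = (1 - (xi i)%:R) * Md i j.
Proof. by rewrite /Kxi block_mxEdr /diag01c mul_diag_mx !mxE. Qed.

Hypothesis (hMs_nn : forall i j, 0 <= Ms i j) (hMd_nn : forall i j, 0 <= Md i j).

Lemma colsum_l xi (j : 'I_n) :
  \sum_(i < n + n) `|Kxi Ms Md xi i (lshift n j)| = \sum_(i < n) Ms i j.
Proof.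
rewrite big_split_ord /= -big_split /=; apply: eq_bigr => i _.
rewrite Kentry_l Kentry_dl; case: (xi i) => /=;
  rewrite ?subrr ?subr0 ?mul0r ?mul1r normr0 ?add0r ?addr0 ger0_norm //.
Qed.

Lemma colsum_r xi (j : 'I_n) :
  \sum_(i < n + n) `|Kxi Ms Md xi i (rshift n j)| = \sum_(i < n) Md i j.
Proof.
rewrite big_split_ord /= -big_split /=; apply: eq_bigr => i _.
rewrite Kentry_ur Kentry_dr; case: (xi i) => /=;
  rewrite ?subrr ?subr0 ?mul0r ?mul1r normr0 ?add0r ?addr0 ger0_norm //.
Qed.

End Aux.

Theorem mainTheorem1 (R : realType) (n : nat) (Ms Md : 'M[R]_n) (d : 'cV[R]_n)
  (hMs_diag : forall i, Ms i i = 0) (hMd_diag : forall i, Md i i = 0)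
  (hMs_nn : forall i j, 0 <= Ms i j) (hMd_nn : forall i j, 0 <= Md i j)
  (hMs_col : forall j, \sum_(i < n) Ms i j < 1)
  (hMd_col : forall j, \sum_(i < n) Md i j < 1)
  (hd : forall i, 0 < d i 0) :
  kappa Ms Md < 1 /\
  (forall (a1 a2 : 'cV[R]_n) (x1 x2 : 'cV[R]_(n + n)),
     (forall i, 0 < a1 i 0) -> (forall i, 0 < a2 i 0) ->
     x1 = gmap Ms Md d a1 x1 -> x2 = gmap Ms Md d a2 x2 ->
     vnorm1 (x1 - x2) <= (1 - kappa Ms Md)^-1 * vnorm1 (a1 - a2)).
Proof.
have hk : kappa Ms Md < 1.
  rewrite /kappa; apply: bigmax_lt => // xi _.
  rewrite /mnorm1; apply: bigmax_lt => // j _.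
  rewrite -(splitK j); case: (split j) => k /=.
  - by rewrite colsum_l.
  - by rewrite colsum_r.
split => //.
set xi0 : {ffun 'I_n -> bool} := [ffun=> true].
have hks : forall j, \sum_(i < n) Ms i j <= kappa Ms Md.
  move=> j; apply: le_trans (le_bigmax _ (fun xi => mnorm1 (Kxi Ms Md xi)) xi0).
  rewrite /mnorm1 -(@colsum_l R n Ms Md hMs_nn xi0 j).
  exact: (le_bigmax _ (fun j => \sum_(i < n + n) `|Kxi Ms Md xi0 i j|) (lshift n j)).
have hkd : forall j, \sum_(i < n) Md i j <= kappa Ms Md.
  move=> j; apply: le_trans (le_bigmax _ (fun xi => mnorm1 (Kxi Ms Md xi)) xi0).
  rewrite /mnorm1 -(@colsum_r R n Ms Md hMd_nn xi0 j).
  exact: (le_bigmax _ (fun j => \sum_(i < n + n) `|Kxi Ms Md xi0 i j|) (rshift n j)).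
move=> a1 a2 x1 x2 _ _ h1 h2.
set k := kappa Ms Md in hk hks hkd *.
pose z (a : 'cV[R]_n) (x : 'cV[R]_(n + n)) (i : 'I_n) :=
  a i 0 + \sum_j Ms i j * usubmx x j 0 + \sum_j Md i j * dsubmx x j 0.
have E : forall a x, x = gmap Ms Md d a x -> forall i,
    usubmx x i 0 = Num.max 0 (z a x i - d i 0) /\
    dsubmx x i 0 = Num.min (d i 0) (z a x i).
  move=> a x hx i; split.
  - by rewrite {1}hx /gmap col_mxKu mxE /z !mxE.
  - by rewrite {1}hx /gmap col_mxKd mxE /z !mxE.
pose ds j := usubmx x1 j 0 - usubmx x2 j 0.
pose dr j := dsubmx x1 j 0 - dsubmx x2 j 0.
have ez : forall i, z a1 x1 i - z a2 x2 i =
   (a1 i 0 - a2 i 0) + \sum_j Ms i j * ds j + \sum_j Md i j * dr j.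
  move=> i; rewrite /z /ds /dr.
  rewrite !(eq_bigr _ (fun j _ => mulrBr _ _ _)) !sumrB; ring.
have bz : forall i, `|z a1 x1 i - z a2 x2 i| <=
   `|a1 i 0 - a2 i 0| + \sum_j Ms i j * `|ds j| + \sum_j Md i j * `|dr j|.
  move=> i; rewrite ez.
  apply: le_trans (ler_normD _ _) _; apply: lerD; last first.
    apply: le_trans (ler_norm_sum _ _ _) _; apply: ler_sum => j _.
    by rewrite normrM ger0_norm.
  apply: le_trans (ler_normD _ _) _; apply: lerD => //.
  apply: le_trans (ler_norm_sum _ _ _) _; apply: ler_sum => j _.
  by rewrite normrM ger0_norm.
have hN : vnorm1 (x1 - x2) = \sum_i `|ds i| + \sum_i `|dr i|.
  rewrite /vnorm1 big_split_ord /=; congr (_ + _); apply: eq_bigr => i _;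
    by rewrite /ds /dr !mxE.
have step1 : vnorm1 (x1 - x2) <= \sum_i `|z a1 x1 i - z a2 x2 i|.
  rewrite hN -big_split /=; apply: ler_sum => i _.
  rewrite /ds /dr; have [-> ->] := E _ _ h1 i; have [-> ->] := E _ _ h2 i.
  exact: key.
have step2 : \sum_i `|z a1 x1 i - z a2 x2 i| <=
    vnorm1 (a1 - a2) + k * vnorm1 (x1 - x2).
  apply: le_trans (ler_sum _ (fun i _ => bz i)) _.
  rewrite !big_split /= hN mulrDr.
  rewrite -addrA; apply: lerD.
    by rewrite /vnorm1; apply: ler_sum => i _; rewrite !mxE.
  apply: lerD; rewrite exchange_big /= mulr_sumr; apply: ler_sum => j _;
    rewrite -mulr_suml; apply: ler_wpM2r => //.
have hpos : 0 < 1 - k by rewrite subr_gt0.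
rewrite ler_pdivlMl // mulrBl mul1r.
have := le_trans step1 step2; lra.
Qed.
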